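(* Let $\mathds{k}$ be an algebraically closed field, $A$ a finite abelian group, $\omega$ a normalized 3-cocycle on $A$ with values in $\mathds{k}^{\times}$, $B$ a finite abelian group, $f:B\to A$ a homomorphism with kernel $K$, and $\phi:B\times B\to\mathds{k}^\times$ a 2-cochain with $d\phi=f^*\omega^{-1}$. Then the function $Bil(\phi):B\times K\rightarrow \mathds{k}^{\times}$ given by $Bil(\phi)(b,k):=\phi(b,k)/\phi(k,b)$ is bilinear.
   Context: For a 2-cochain $\kappa$ on an abelian group, $(d\kappa)(a,b,c)=\kappa(b,c)\kappa(a+b,c)^{-1}\kappa(a,b+c)\kappa(a,b)^{-1}$; $(f^*\omega^{-1})(b,c,d)=\omega(f(b),f(c),f(d))^{-1}$. Normalized means $\omega(a,b,c)=1$ whenever one of $a,b,c$ is $0$. *)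

(* Defs.v *)
From HB Require Import structures.
From mathcomp Require Import all_boot all_order all_algebra.
Set Implicit Arguments. Unset Strict Implicit. Unset Printing Implicit Defensive.
Import GRing.Theory.
Local Open Scope ring_scope.

(* k^x-valued cochains are modelled as k-valued functions taking only nonzero values. *)

Definition normalized3 (k : fieldType) (A : zmodType) (w : A -> A -> A -> k) :=
  forall a b c : A, (a = 0 \/ b = 0 \/ c = 0) -> w a b c = 1.

Definition is_3cocycle (k : fieldType) (A : zmodType) (w : A -> A -> A -> k) :=
  forall a b c d : A,
    w b c d * (w (a + b) c d)^-1 * w a (b + c) d * (w a b (c + d))^-1 * w a b c = 1.

Definition coboundary2 (k : fieldType) (B : zmodType) (kap : B -> B -> k) :
  B -> B -> B -> k :=
  fun a b c => kap b c * (kap (a + b) c)^-1 * kap a (b + c) * (kap a b)^-1.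

Definition pullback_inv (k : fieldType) (A B : zmodType) (f : B -> A)
  (w : A -> A -> A -> k) : B -> B -> B -> k :=
  fun b c d => (w (f b) (f c) (f d))^-1.

Definition Bil (k : fieldType) (B : zmodType) (phi : B -> B -> k) (b x : B) : k :=
  phi b x / phi x b.

(* Main.v *)
Require Import Defs.
From HB Require Import structures.
From mathcomp Require Import all_boot all_order all_algebra.
From mathcomp Require Import ring.
Import GRing.Theory.
Local Open Scope ring_scope.

Theorem lemma2p1p1 (k : closedFieldType) (A : finZmodType)
  (w : A -> A -> A -> k)
  (w_nz : forall a b c, w a b c != 0)
  (w_norm : normalized3 w) (w_coc : is_3cocycle w)
  (B : finZmodType) (f : {additive B -> A})
  (phi : B -> B -> k) (phi_nz : forall b c, phi b c != 0)
  (dphi : forall a b c, coboundary2 phi a b c = pullback_inv f w a b c) :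
  (forall b1 b2 x : B, f x = 0 -> Bil phi (b1 + b2) x = Bil phi b1 x * Bil phi b2 x) /\
  (forall (b x1 x2 : B), f x1 = 0 -> f x2 = 0 ->
      Bil phi b (x1 + x2) = Bil phi b x1 * Bil phi b x2).
Proof.
have key : forall a b c, (f a = 0 \/ f b = 0 \/ f c = 0) ->
    phi b c * phi a (b + c) = phi (a + b) c * phi a b.
  move=> a b c H.
  have := dphi a b c; rewrite /coboundary2 /pullback_inv.
  rewrite (w_norm _ _ _ H) invr1 => E.
  have n1 := phi_nz (a + b) c; have n2 := phi_nz a b.
  have : phi b c * (phi (a + b) c)^-1 * phi a (b + c) * (phi a b)^-1
     * (phi (a + b) c * phi a b) = phi (a + b) c * phi a b by rewrite E mul1r.
  move=> <-; field; repeat (apply/andP; split); first [exact: phi_nz | assumption | idtac].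
have K1 : forall a b c, (f a = 0 \/ f b = 0 \/ f c = 0) ->
    phi (a + b) c = phi b c * phi a (b + c) / phi a b.
  move=> a b c H; rewrite key //; have := phi_nz a b => n; field; repeat (apply/andP; split); first [exact: phi_nz | assumption | idtac].
have K2 : forall a b c, (f a = 0 \/ f b = 0 \/ f c = 0) ->
    phi a (b + c) = phi (a + b) c * phi a b / phi b c.
  move=> a b c H; rewrite -key //; have := phi_nz b c => n; field; repeat (apply/andP; split); first [exact: phi_nz | assumption | idtac].
split.
- move=> b1 b2 x Hx; rewrite /Bil.
  rewrite (K1 b1 b2 x); last by auto.
  rewrite (K2 x b1 b2); last by auto.
  rewrite (addrC b2 x) (K2 b1 x b2); last by auto.
  have := phi_nz b1 b2; have := phi_nz x b2; have := phi_nz x b1;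
  have := phi_nz b2 x; have := phi_nz b1 x; have := phi_nz (x + b1) b2;
  have := phi_nz (b1 + x) b2; rewrite (addrC b1 x) => *.
  field; repeat (apply/andP; split); first [exact: phi_nz | assumption | idtac].
- move=> b x1 x2 H1 H2; rewrite /Bil.
  rewrite (K2 b x1 x2); last by auto.
  rewrite (K1 x1 x2 b); last by auto.
  rewrite (addrC x2 b) (K2 x1 b x2); last by auto.
  rewrite (addrC x1 b).
  have := phi_nz b x1; have := phi_nz x1 x2; have := phi_nz x2 b;
  have := phi_nz x1 b; have := phi_nz b x2; have := phi_nz x1 (b + x2);
  have := phi_nz (x1 + b) x2; have := phi_nz (b+x1) x2 => *.
  field; repeat (apply/andP; split); first [exact: phi_nz | assumption | idtac].
Qed.
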